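(* Let $(X,\mathcal{O}(X))$ be a measurable space, $\mathcal{A}$ a unital $C^*$-algebra and $\mathcal{H}$ a Hilbert space. If $\mathcal{I}:\mathcal{O}(X)\to CP(\mathcal{A},\mathcal{B}(\mathcal{H}))$ is a pure CP instrument, then its POVM marginal $\mu_\mathcal{I}$ is trivial, i.e. for every $A\in\mathcal{O}(X)$ either $\mu_\mathcal{I}(A)=0$ or $\mu_\mathcal{I}(A)=\mu_\mathcal{I}(X)$.
   Context: A CP instrument is a map $\mathcal{I}$ from $\mathcal{O}(X)$ to the completely positive maps $\mathcal{A}\to\mathcal{B}(\mathcal{H})$ such that for all $a\in\mathcal{A}$, $h,k\in\mathcal{H}$, $A\mapsto\langle h,\mathcal{I}(A)(a)k\rangle$ is a countably additive complex measure. Its POVM marginal is $\mu_\mathcal{I}(A)=\mathcal{I}(A)(1_\mathcal{A})$. A CP instrument $\mathcal{J}$ is dominated by $\mathcal{I}$ if $\mathcal{I}-\mathcal{J}$ is a CP instrument; $\mathcal{I}$ is pure if every CP instrument dominated by $\mathcal{I}$ equals $t\mathcal{I}$ for some $t\in[0,1]$. *)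

(* Defs.v *)
From mathcomp Require Import all_boot all_algebra complex.
From mathcomp Require Import all_classical all_reals.
From mathcomp Require Import measure_theory.measurable_structure.
Set Implicit Arguments. Unset Strict Implicit. Unset Printing Implicit Defensive.
Import GRing.Theory Num.Theory.
Local Open Scope ring_scope.
Local Open Scope classical_set_scope.

Section Defs.
Variable R : realType.
Local Notation C := R[i].

Definition is_unital_Cstar_algebra (A : algType C) (star : A -> A) (nA : A -> R) :=
  (
      (forall a, star (star a) = a) /\
      (forall a b, star (a + b) = star a + star b) /\
      (forall (c : C) a, star (c *: a) = c^* *: star a) /\
      (forall a b, star (a * b) = star b * star a)) /\
  (
      (forall a, nA a = 0 <-> a = 0) /\
      (forall a b, nA (a + b) <= nA a + nA b) /\
      (forall (c : C) a, real_complex R (nA (c *: a)) = `|c| * real_complex R (nA a))) /\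
  (
      (forall a b, nA (a * b) <= nA a * nA b) /\
      (forall a, nA (star a * a) = nA a ^+ 2)) /\
      (forall u : nat -> A,
          (forall e : R, 0 < e -> exists N, forall m n, (N <= m)%N -> (N <= n)%N ->
               nA (u m - u n) < e) ->
          exists l, forall e : R, 0 < e -> exists N, forall n, (N <= n)%N ->
               nA (u n - l) < e).

Definition ipnorm (H : lmodType C) (ip : H -> H -> C) (h : H) : R :=
  Num.sqrt (complex.Re (ip h h)).

Definition is_Hilbert_space (H : lmodType C) (ip : H -> H -> C) :=
  [/\ (forall h (c : C) k k', ip h (c *: k + k') = c * ip h k + ip h k'),
      (forall h k, ip k h = (ip h k)^*),
      (forall h, 0 <= ip h h),
      (forall h, ip h h = 0 -> h = 0) &
      (forall u : nat -> H,
          (forall e : R, 0 < e -> exists N, forall m n, (N <= m)%N -> (N <= n)%N ->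
               ipnorm ip (u m - u n) < e) ->
          exists l, forall e : R, 0 < e -> exists N, forall n, (N <= n)%N ->
               ipnorm ip (u n - l) < e)].

Definition is_bounded_operator (H : lmodType C) (ip : H -> H -> C) (T : H -> H) :=
  (forall (c : C) h k, T (c *: h + k) = c *: T h + T k) /\
  exists M : R, forall h, ipnorm ip (T h) <= M * ipnorm ip h.

(** ** Completely positive maps A -> B(H).
    [Phi] is linear, takes values in B(H), and for every n the amplification
    Phi_n : M_n(A) -> M_n(B(H)) = B(H^n) maps positive elements x^* x of
    M_n(A) to positive operators on H^n, i.e. for all xi in H^n,
    < xi, Phi_n(x^* x) xi > >= 0, where (x^* x)_{ij} = sum_k (x_{ki})^* x_{kj}. *)
Definition is_CP (A : algType C) (star : A -> A) (H : lmodType C)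
    (ip : H -> H -> C) (Phi : A -> H -> H) :=
  [/\ (forall (c : C) a b, Phi (c *: a + b) = (fun h => c *: Phi a h + Phi b h)),
      (forall a, is_bounded_operator ip (Phi a)) &
      (forall (n : nat) (x : 'I_n -> 'I_n -> A) (xi : 'I_n -> H),
          0 <= \sum_(i < n) \sum_(j < n)
                 ip (xi i) (Phi (\sum_(k < n) star (x k i) * x k j) (xi j)))].

(** ** CP instruments on a measurable space X (values on non-measurable sets
    are irrelevant). *)
Definition is_CP_instrument (d : measure_display) (X : measurableType d)
    (A : algType C) (star : A -> A) (H : lmodType C) (ip : H -> H -> C)
    (I : set X -> A -> H -> H) :=
  (forall B, measurable B -> is_CP star ip (I B)) /\
  (* countable additivity of B |-> < h, I(B)(a) k > *)
  (forall (a : A) (h k : H) (F : nat -> set X),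
      (forall n, measurable (F n)) -> trivIset setT F ->
      forall e : C, 0 < e -> exists N, forall n, (N <= n)%N ->
        `| \sum_(i < n) ip h (I (F i) a k) - ip h (I (\bigcup_i F i) a k) | < e).

Definition instr_sub (X : Type) (A : Type) (H : zmodType)
    (I J : set X -> A -> H -> H) : set X -> A -> H -> H :=
  fun B a h => I B a h - J B a h.

Definition dominated (d : measure_display) (X : measurableType d)
    (A : algType C) (star : A -> A) (H : lmodType C) (ip : H -> H -> C)
    (J I : set X -> A -> H -> H) :=
  is_CP_instrument star ip J /\ is_CP_instrument star ip (instr_sub I J).

Definition pure_instrument (d : measure_display) (X : measurableType d)
    (A : algType C) (star : A -> A) (H : lmodType C) (ip : H -> H -> C)
    (I : set X -> A -> H -> H) :=
  is_CP_instrument star ip I /\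
  forall J : set X -> A -> H -> H, dominated star ip J I ->
    exists t : R, 0 <= t <= 1 /\
      forall B, measurable B -> forall a h, J B a h = real_complex R t *: I B a h.

Definition povm_marginal (X : Type) (A : algType C) (H : lmodType C)
    (I : set X -> A -> H -> H) (B : set X) : H -> H := I B 1.

End Defs.

(* Main.v *)
Require Import Defs.
From mathcomp Require Import all_boot all_algebra complex.
From mathcomp Require Import all_classical all_reals.
From mathcomp Require Import measure_theory.measurable_structure.
From mathcomp Require Import order zify.
Import Order.TTheory GRing.Theory Num.Theory.
Local Open Scope ring_scope.
Local Open Scope classical_set_scope.

Section Aux.
Variables (R : realType) (d : measure_display) (X : measurableType d)
    (A : algType R[i]) (star : A -> A)
    (H : lmodType R[i]) (ip : H -> H -> R[i]).

Lemma ext_instr (I1 I2 : set X -> A -> H -> H) :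
  is_CP_instrument star ip I1 ->
  (forall C, measurable C -> I1 C = I2 C) ->
  is_CP_instrument star ip I2.
Proof.
move=> [HCP Hadd] E; split.
  by move=> B mB; rewrite -E //; exact: HCP.
move=> a h k F mF tF e e0.
have [N HN] := Hadd a h k F mF tF e e0.
exists N => n Nn.
rewrite -E; last exact: bigcup_measurable.
under eq_bigr => i _ do rewrite -E //.
exact: HN.
Qed.

Lemma restr_instr (I : set X -> A -> H -> H) (D : set X) :
  is_CP_instrument star ip I -> measurable D ->
  is_CP_instrument star ip (fun C => I (C `&` D)).
Proof.
move=> [HCP Hadd] mD; split.
  by move=> B mB; apply: HCP; exact: measurableI.
move=> a h k F mF tF e e0.
have [N HN] := Hadd a h k (fun i => F i `&` D)
  (fun n => measurableI _ _ (mF n) mD) (trivIset_setIr tF) e e0.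
exists N => n Nn.
by rewrite setI_bigcupl; exact: HN.
Qed.

Lemma lim_const (z L : R[i]) :
  (forall e : R[i], 0 < e -> exists N, forall n, (N <= n)%N -> `|z - L| < e) ->
  z = L.
Proof.
move=> Hl; apply/eqP; rewrite -subr_eq0; apply: contraT => nz.
have [N HN] := Hl `|z - L| ltac:(by rewrite normr_gt0 nz).
by have := HN N (leqnn N); rewrite ltxx.
Qed.

Lemma lim_mul (z : R[i]) :
  (forall e : R[i], 0 < e -> exists N, forall n, (N <= n)%N -> `|z *+ n - z| < e) ->
  z = 0.
Proof.
move=> Hl; apply/eqP; apply: contraT => nz.
have [N HN] := Hl `|z| ltac:(by rewrite normr_gt0 nz).
have := HN N.+2 (leqW (leqnSn N)).
rewrite mulrS addrAC subrr add0r normrMn mulrS.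
have h0 : 0 <= `|z| *+ N by rewrite mulrn_wge0.
by rewrite gtrDl (le_gtF h0).
Qed.

Hypothesis HH : is_Hilbert_space ip.

Lemma ipB h x y : ip h (x - y) = ip h x - ip h y.
Proof.
case: HH => Hlin _ _ _ _.
have := Hlin h (-1) y x; rewrite scaleN1r mulN1r.
by rewrite addrC [ip h x - _]addrC.
Qed.

Lemma ipD h x y : ip h (x + y) = ip h x + ip h y.
Proof.
case: HH => Hlin _ _ _ _.
by have := Hlin h 1 x y; rewrite scale1r mul1r.
Qed.

Lemma ip_eq x y : (forall h, ip h x = ip h y) -> x = y.
Proof.
case: HH => _ _ _ Hdef _ Hx.
apply/eqP; rewrite -subr_eq0; apply/eqP; apply: Hdef.
by rewrite ipB Hx subrr.
Qed.

Lemma I0 (I : set X -> A -> H -> H) :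
  is_CP_instrument star ip I -> forall a k, I set0 a k = 0.
Proof.
move=> [_ Hadd] a k.
have zz : forall h, ip h (I set0 a k) = 0.
  move=> h; apply: lim_mul => e e0.
  have tF : trivIset setT (fun _ : nat => @set0 X).
    by move=> i j _ _ [x [] []].
  have [N HN] := Hadd a h k (fun _ => set0) (fun _ => measurable0) tF e e0.
  exists N => n Nn; have := HN n Nn.
  have -> : \bigcup_(i in setT) (fun _ : nat => @set0 X) i = set0.
    by apply/seteqP; split => x // [].
  by rewrite sumr_const card_ord.
apply: ip_eq => h.
rewrite zz.
by have := ipB h 0 0; rewrite subrr => ->; rewrite subrr.
Qed.

Lemma I_split (I : set X -> A -> H -> H) (C B : set X) :
  is_CP_instrument star ip I -> measurable C -> measurable B ->
  forall a k, I C a k = I (C `&` B) a k + I (C `&` ~` B) a k.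
Proof.
move=> HI mC mB a k.
have I0' := @I0 I HI.
case: HI => _ Hadd.
apply: ip_eq => h; rewrite ipD.
pose F := fun n : nat => if n == 0%N then C `&` B else if n == 1%N then C `&` ~` B else set0.
have mF : forall n, measurable (F n).
  move=> n; rewrite /F; case: ifP => _.
    exact: measurableI.
  case: ifP => _; last exact: measurable0.
  by apply: measurableI => //; exact: measurableC.
have tF : trivIset setT F.
  apply: ltn_trivIset => n m mn; rewrite /F.
  case: n mn => // [] [|n] mn /=.
    by case: m mn => //= _; apply/seteqP; split => x // [[_ ?] [_ ?]].
  by rewrite setI0.
have UF : \bigcup_(i in setT) F i = C.
  apply/seteqP; split => x.
    by case=> -[|[|n]] _ //= [].
  move=> Cx; case: (pselect (B x)) => Bx.
    by exists 0%N.
  by exists 1%N.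
apply/esym; apply: lim_const => e e0.
have [N HN] := Hadd a h k F mF tF e e0.
exists (N + 2)%N => n Nn; have := HN n (leq_trans (leq_addr _ _) Nn).
rewrite UF.
have [m ->] : exists m, n = m.+2 by exists (n - 2)%N; lia.
rewrite !big_ord_recl big1 ?addr0 //=.
move=> i _; rewrite /F /= I0'.
by have := ipB h 0 0; rewrite subrr => ->; rewrite subrr.
Qed.
End Aux.


Theorem corollary2p20 (R : realType) (d : measure_display) (X : measurableType d)
    (A : algType R[i]) (star : A -> A) (nA : A -> R)
    (H : lmodType R[i]) (ip : H -> H -> R[i])
    (I : set X -> A -> H -> H) :
  is_unital_Cstar_algebra star nA ->
  is_Hilbert_space ip ->
  pure_instrument star ip I ->
  forall B : set X, measurable B ->
    povm_marginal I B = (fun _ => 0) \/ povm_marginal I B = povm_marginal I setT.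
Proof.
move=> _ HH [HI Hpure] B mB.
have HJ := restr_instr _ _ _ _ _ _ _ _ _ HI mB.
have HK : is_CP_instrument star ip (instr_sub I (fun C => I (C `&` B))).
  apply: (ext_instr _ _ _ _ _ _ _ _ _ (restr_instr _ _ _ _ _ _ _ _ _ HI (measurableC mB))) => C mC.
  apply/funext => a; apply/funext => k.
  by rewrite /instr_sub (I_split _ _ _ _ _ _ _ HH I _ _ HI mC mB a k) addrAC subrr add0r.
have [t [t01 Ht]] := Hpure _ (conj HJ HK).
have E1 := Ht setT measurableT 1; have E2 := Ht B mB 1.
rewrite setTI in E1; rewrite setIid in E2.
rewrite /povm_marginal.
have [t1E|t1] := eqVneq t 1.
  right; apply/funext => h; rewrite E1 t1E.
  have -> : real_complex R 1 = 1 by [].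
  by rewrite scale1r.
left; apply/funext => h.
have := E2 h; move/eqP.
rewrite -subr_eq0 -{1}(scale1r (I B 1 h)) -scalerBl scaler_eq0 => /orP[|/eqP//].
rewrite subr_eq0 => /eqP h1; exfalso.
have := congr1 (@complex.Re R) h1 => /= h2.
by move: t1; rewrite -h2 eqxx.
Qed.
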